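(* Let $b_1>b_2>0$, $m\in\mathbb R$ and $d\ge1$. Let $Y_1\sim b_1\chi^2_d$ and $Y_2\sim b_2\chi^2_d$ (not necessarily independent). Then $$\mathbb P(Y_1-Y_2\le m)\le \exp\!\Bigl(m\,\frac{b_1-b_2}{8b_1b_2}\Bigr)\rho^{d/4},\qquad \rho=1-\Bigl(\frac{b_1-b_2}{b_1+b_2}\Bigr)^2<1.$$
   Context: For $b>0$, ''$Y\sim b\chi^2_d$'' means $Y/b$ has the chi-squared distribution with $d$ degrees of freedom. *)

(* Defs.v *)
From HB Require Import structures.
From mathcomp Require Import all_boot all_order all_algebra.
From mathcomp Require Import all_classical all_reals all_analysis.
Set Implicit Arguments. Unset Strict Implicit. Unset Printing Implicit Defensive.
Import Order.TTheory GRing.Theory Num.Theory.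
Local Open Scope classical_set_scope.
Local Open Scope ring_scope.

Definition chi2_kernel {R : realType} (d : nat) (x : R) : R :=
  if 0 < x then x `^ (d%:R / 2 - 1) * expR (- x / 2) else 0.

(* Normalized chi-squared density: kernel divided by its total Lebesgue
   integral (which equals 2^(d/2) Gamma(d/2)). *)
Definition chi2_pdf {R : realType} (d : nat) (x : R) : R :=
  chi2_kernel d x / Rintegral (@lebesgue_measure R) setT (chi2_kernel d).

Definition is_chi2 {R : realType} (dT : measure_display) (T : measurableType dT)
  (P : probability T R) (X : T -> R) (d : nat) : Prop :=
  forall A : set R, measurable A ->
    P (X @^-1` A) = (\int[@lebesgue_measure R]_(x in A) (chi2_pdf d x)%:E)%E.

Definition is_scaled_chi2 {R : realType} (dT : measure_display)
  (T : measurableType dT) (P : probability T R) (Y : T -> R) (b : R) (d : nat)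
  : Prop :=
  is_chi2 P (fun w => Y w / b) d.

(* Main.v *)
Require Import Defs.
From HB Require Import structures.
From mathcomp Require Import all_boot all_order all_algebra.
From mathcomp Require Import all_classical all_reals all_analysis.
From mathcomp Require Import measurable_realfun.
From mathcomp Require Import ring lra.
Import Order.TTheory GRing.Theory Num.Theory numFieldNormedType.Exports.
Local Open Scope classical_set_scope.
Local Open Scope ring_scope.
Section scale.
Context (R : realType) (c : R) (c0 : (0 < c)%R).
Local Open Scope ereal_scope.

Definition hsc (x : measurableTypeR R) : measurableTypeR R := (c * x)%R.
Lemma scale_mf : measurable_fun [set: measurableTypeR R] hsc.
Proof. exact: measurable_realfun.mulrl_measurable. Qed.

Lemma leb_scale {A : set (measurableTypeR R)} : measurable A ->
  (@lebesgue_measure R) A = c%:E * pushforward (@lebesgue_measure R) hsc A.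
Proof.
move=> mA.
have := @lebesgue_measure_unique R (@mscale _ (measurableTypeR R) R (NngNum (ltW c0)) (pushforward (@lebesgue_measure R) hsc)).

move=> /(_ scale_mf) H; rewrite {}H //.
move=> _ [[a b]] _ <-.
change (lebesgue_measure `]a, b]%classic = c%:E * lebesgue_measure (hsc @^-1` `]a, b]%classic)).
rewrite (_ : hsc @^-1` _ = `](a / c)%R, (b / c)%R]%classic); last first.
  apply/seteqP; split => x /=; rewrite !in_itv /= /hsc.
    by rewrite ltr_pdivrMr // ler_pdivlMr // ![(x * c)%R]mulrC.
  by rewrite ltr_pdivrMr // ler_pdivlMr // ![(x * c)%R]mulrC.
rewrite !lebesgue_measure_itv /= !lte_fin ltr_pM2r ?invr_gt0 //.
case: ifP => _; last by rewrite mule0.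
by rewrite -EFinD -EFinM -mulrBl mulrCA divff ?gt_eqF ?mulr1.
Qed.

Lemma integral_scale (f : R -> \bar R) :
  measurable_fun [set: R] f -> (forall x, 0 <= f x) ->
  \int[@lebesgue_measure R]_x f x = c%:E * \int[@lebesgue_measure R]_x f (c * x)%R.
Proof.
move=> mf f0.
have -> : \int[@lebesgue_measure R]_x f (c * x)%R =
   \int[pushforward (@lebesgue_measure R) hsc]_x f x.
  by rewrite (ge0_integral_pushforward scale_mf) //.
rewrite (@eq_measure_integral _ _ _ _ (@mscale _ (measurableTypeR R) R (NngNum (ltW c0)) (pushforward (@lebesgue_measure R) hsc))); last first.
  move=> ? A mA _; have H := leb_scale mA. exact: H.
move=> ?; rewrite ge0_integral_mscale //.
exact: scale_mf.
Qed.
End scale.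

Section density.
Context d (T : measurableType d) (R : realType).
Variables (nu mu : {measure set T -> \bar R}) (g : T -> R).
Hypothesis mg : measurable_fun setT g.
Hypothesis g0 : forall x, (0 <= g x)%R.
Hypothesis hnu : forall A, measurable A -> nu A = (\int[mu]_(x in A) (g x)%:E)%E.
Local Open Scope ereal_scope.
Import HBNNSimple.

Lemma density_integral f E : (forall x, 0 <= f x) ->
    measurable E -> measurable_fun E f ->
  \int[mu]_(x in E) (f x * (g x)%:E) = \int[nu]_(x in E) f x.
Proof.
move=> f0 mE mf; set ge := (fun x => (g x)%:E).
have mge : measurable_fun setT ge by apply/measurable_EFinP.
pose h := nnsfun_approx mE mf.
have -> : \int[nu]_(x in E) f x =
    lim (\int[nu]_(x in E) (EFin \o h n) x @[n --> \oo]).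
  have fE x : E x -> f x = lim ((EFin \o h n) x @[n --> \oo]).
    by move=> Ex; apply/esym/cvg_lim => //; exact: cvg_nnsfun_approx.
  under eq_integral => x /[!inE] /fE -> //.
  apply: monotone_convergence => //.
  - move=> n; apply/measurable_EFinP.
    by apply: (measurable_funS measurableT) => //; exact/measurable_funP.
  - by move=> n x Ex //=; rewrite lee_fin.
  - by move=> x Ex a b ab; rewrite lee_fin; exact/lefP/nd_nnsfun_approx.
have -> : \int[mu]_(x in E) (f \* ge) x =
    lim (\int[mu]_(x in E) ((EFin \o h n) \* ge) x @[n --> \oo]).
  have fg x : E x -> f x * ge x = lim (((EFin \o h n) \* ge) x @[n --> \oo]).
    by move=> Ex; apply/esym/cvg_lim => //; apply: cvgeZr;
      [by []|exact: cvg_nnsfun_approx].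
  under eq_integral => x /[!inE] /fg -> //.
  apply: monotone_convergence => [//| | |].
  - move=> n; apply/emeasurable_funM; apply/measurable_funTS.
      exact/measurable_EFinP.
    exact: mge.
  - by move=> n x Ex /=; rewrite mule_ge0 ?lee_fin ?g0.
  - by move=> x Ex a b ab/=; rewrite lee_wpmul2r ?lee_fin ?g0//; exact/lefP/nd_nnsfun_approx.
suff suf n : \int[mu]_(x in E) ((EFin \o h n) x * ge x) =
    \int[nu]_(x in E) (EFin \o h n) x.
  by under eq_fun do rewrite suf.
transitivity (\int[nu]_(x in E)
   (\sum_(y \in range (h n)) (y * \1_(h n @^-1` [set y]) x)%:E)); last first.
  by apply: eq_integral => t tE; rewrite /= fimfunE -fsumEFin.
have indich m r : measurable_fun E (fun x => (r * \1_(h m @^-1` [set r]) x)%:E).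
  by apply: (measurable_comp measurableT) => //; exact: measurable_funM.
rewrite ge0_integral_fsum//; last by move=> m y Ey; exact: nnfun_muleindic_ge0.
transitivity (\int[mu]_(x in E) (\sum_(y \in range (h n))
    (y * \1_(h n @^-1` [set y]) x)%:E * ge x)).
  under [RHS]eq_integral => x xE.
    rewrite -ge0_mule_fsuml => [|y]; last exact: nnfun_muleindic_ge0.
    rewrite fsumEFin // -(fimfunE _ x); over.
  by [].
rewrite ge0_integral_fsum//; last 2 first.
  - move=> y; apply: emeasurable_funM => //; apply: measurable_funTS.
    exact: mge.
  - by move=> m y Ey; rewrite mule_ge0 ?nnfun_muleindic_ge0 ?lee_fin ?g0.
apply: eq_fsbigr => r rhn.
under [RHS]eq_integral do rewrite EFinM.
rewrite integralZl_indic_nnsfun => //.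
under eq_integral do rewrite EFinM -muleA.
rewrite ge0_integralZl//.
- under eq_integral do rewrite muleC.
  rewrite (eq_integral (ge \_ (h n @^-1` [set r]))); last first.
    by move=> x xE; rewrite epatch_indic.
  by rewrite -integral_mkcondr -hnu// ?integral_indic// setIC//; exact: measurableI.
- apply: emeasurable_funM; first exact/measurable_EFinP.
  exact/measurable_funTS/mge.
- by move=> t Et; rewrite mule_ge0 ?lee_fin ?g0.
- by move: rhn; rewrite inE => -[t _ <-]; rewrite lee_fin.
Qed.
End density.

Section kernel.
Context (R : realType) (d : nat).
Local Notation k := (@chi2_kernel R d).
Local Notation p := ((d%:R / 2 - 1) : R).

Lemma mk : measurable_fun [set: R] k.
Proof.
rewrite /chi2_kernel; apply: measurable_fun_ifT.
- by apply: measurable_fun_ltr => //; exact: measurable_cst.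
- apply: measurable_funM; first exact: measurable_powR.
  apply: measurableT_comp; first exact: measurable_expR.
  apply: measurable_funM; last exact: measurable_cst.
  exact: oppr_measurable.
- exact: measurable_cst.
Qed.

Lemma k0 x : 0 <= k x.
Proof.
by rewrite /chi2_kernel; case: ifP => // _; rewrite mulr_ge0 ?powR_ge0 ?expR_ge0.
Qed.

Lemma k_scale (s x : R) : 0 < 1 - 2 * s ->
  expR (s * x) * k x = (1 - 2 * s) `^ (- p) * k ((1 - 2 * s) * x).
Proof.
set c := 1 - 2 * s => c0.
rewrite /chi2_kernel pmulr_rgt0 //.
case: ifP => x0; last by rewrite !mulr0.
rewrite powRM ?(ltW c0) ?(ltW x0) // powRN.
have E : expR (- (c * x) / 2) = expR (s * x) * expR (- x / 2).
  by rewrite -expRD /c; congr expR; field.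
have cp : c `^ p != 0 by rewrite gt_eqF // powR_gt0.
rewrite E; field.
by rewrite cp.
Qed.

End kernel.

Section mgf.
Context (R : realType) (dT : measure_display) (T : measurableType dT)
  (P : probability T R) (d : nat).
Local Notation k := (@chi2_kernel R d).
Local Open Scope ereal_scope.

Lemma chi2_norm (X : T -> R) : is_chi2 P X d ->
  (0 < Rintegral (@lebesgue_measure R) setT k)%R /\
  \int[@lebesgue_measure R]_x (k x)%:E = (Rintegral (@lebesgue_measure R) setT k)%:E.
Proof.
move=> H.
have H1 := H setT measurableT.
rewrite preimage_setT probability_setT /chi2_pdf in H1.
move: H1; rewrite /Rintegral.
have Ik0 : 0 <= \int[@lebesgue_measure R]_x (k x)%:E.
  by apply: integral_ge0 => x _; rewrite lee_fin k0.
move: Ik0.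
move: (\int[@lebesgue_measure R]_x (k x)%:E) => I I0 H1.
have C0 : fine I != 0%R.
  case: (eqVneq (fine I) 0%R) => // C0; exfalso.
  move: H1; rewrite C0.
  rewrite integral0_eq; first by move/eqP; rewrite onee_eq0.
  by move=> x _; rewrite invr0 mulr0.
have Cfin : I \is a fin_num.
  rewrite ge0_fin_numE // ltey; apply/negP => /eqP Iy.
  by move: C0; rewrite Iy /= eqxx.
split; last by rewrite fineK.
by rewrite lt_def C0 /= fine_ge0.
Qed.

Lemma chi2_mgf (X : T -> R) (mX : measurable_fun setT X) : is_chi2 P X d ->
  forall s : R, (0 < 1 - 2 * s)%R ->
  \int[P]_w (expR (s * X w))%:E = ((1 - 2 * s) `^ (- (d%:R / 2)))%:E.
Proof.
move=> H s c0.
have [C0 IkE] := chi2_norm X H.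
move: C0 IkE; rewrite /chi2_pdf.
have mexp : measurable_fun [set: R] (fun y : R => (expR (s * y))%:E).
  apply/measurable_EFinP; apply: measurableT_comp; first exact: measurable_expR.
  exact: measurable_realfun.mulrl_measurable.
transitivity (\int[pushforward P (X : T -> measurableTypeR R)]_y (expR (s * y))%:E).
  by rewrite ge0_integral_pushforward //= preimage_setT.
have mpdf : measurable_fun [set: measurableTypeR R] (chi2_pdf d : measurableTypeR R -> R).
  by apply: measurable_funM; [exact: mk | exact: measurable_cst].
have pdf0 : forall x, (0 <= chi2_pdf d x :> R)%R.
  move=> x; rewrite /chi2_pdf divr_ge0 ?k0 //.
  by rewrite /Rintegral fine_ge0 // integral_ge0 // => y _; rewrite lee_fin k0.
rewrite -(@density_integral _ (measurableTypeR R) R (pushforward P (X : T -> measurableTypeR R)) (@lebesgue_measure R) (chi2_pdf d) mpdf pdf0); first last.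
- exact: mexp.
- exact: measurableT.
- by move=> x; rewrite lee_fin expR_ge0.
- by move=> A mA; exact: H.
rewrite /chi2_pdf; move: C0 IkE; set C := Rintegral _ _ _; clearbody C => C0 IkE.
have mkE : measurable_fun [set: R] (fun x => (k x)%:E) by apply/measurable_EFinP; exact: mk.
have k0E : forall x : R, 0 <= (k x)%:E by move=> x; rewrite lee_fin k0.
have J : \int[@lebesgue_measure R]_x (k ((1 - 2 * s) * x))%:E = ((1 - 2 * s)^-1 * C)%:E.
  rewrite EFinM -IkE (@integral_scale R _ c0 (fun x => (k x)%:E) mkE k0E).
  by rewrite muleA -EFinM mulVf ?gt_eqF // mul1e.
under eq_integral => x _ do rewrite -EFinM mulrA k_scale // mulrAC EFinM.
rewrite ge0_integralZl //; try (by rewrite lee_fin divr_ge0 ?powR_ge0 ?ltW);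
  try (by move=> x _; rewrite lee_fin k0);
  try (by apply/measurable_EFinP; apply: measurableT_comp; [exact: mk| exact: measurable_realfun.mulrl_measurable]).
rewrite J -EFinM; congr EFin.
have cn0 : (1 - 2 * s)%R != 0%R by rewrite gt_eqF.
rewrite (_ : (- (d%:R / 2) = - (d%:R / 2 - 1) + (-1))%R); last by field.
rewrite powRD ?cn0 ?implybT // powR_inv1 ?ltW //.
by field; rewrite cn0 gt_eqF.
Qed.

End mgf.

Theorem lemma3p3 (R : realType) (dT : measure_display) (T : measurableType dT)
  (P : probability T R) (b1 b2 m : R) (d : nat)
  (Y1 Y2 : {RV P >-> R}) :
  0 < b2 -> b2 < b1 -> (1 <= d)%N ->
  is_scaled_chi2 P Y1 b1 d -> is_scaled_chi2 P Y2 b2 d ->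
  let rho := 1 - ((b1 - b2) / (b1 + b2)) ^+ 2 in
  rho < 1 /\
  (P [set w | (Y1 w - Y2 w <= m)%R] <=
    (expR (m * ((b1 - b2) / (8 * b1 * b2))) * rho `^ (d%:R / 4))%R%:E)%E.
Proof.
move=> b20 b21 d1 H1 H2 rho.
have b10 : 0 < b1 by apply: lt_trans b21.
have sp : 0 < b1 + b2 by rewrite addr_gt0.
have b1n : b1 != 0 by rewrite gt_eqF.
have b2n : b2 != 0 by rewrite gt_eqF.
have spn : b1 + b2 != 0 by rewrite gt_eqF.
split.
  have : 0 < ((b1 - b2) / (b1 + b2)) ^+ 2.
    by rewrite exprn_gt0 // divr_gt0 // subr_gt0.
  rewrite /rho; lra.
set t := (b1 - b2) / (8 * b1 * b2).
have tE : t = (b1 - b2) / (8 * b1 * b2) by [].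
clearbody t.
have t0 : 0 < t by rewrite tE divr_gt0 ?subr_gt0 // !mulr_gt0.
pose al := (b1 + b2) / (2 * b2).
pose be := (b1 + b2) / (2 * b1).
have al0 : 0 < al by rewrite divr_gt0 // mulr_gt0.
have be0 : 0 < be by rewrite divr_gt0 // mulr_gt0.
pose s1 := - (2 * t * b1).
pose s2 := 2 * t * b2.
have hs1 : 1 - 2 * s1 = al by rewrite /s1 /al tE; field; rewrite b1n b2n.
have hs2 : 1 - 2 * s2 = be by rewrite /s2 /be tE; field; rewrite b1n b2n.
have mX1 : measurable_fun setT (fun w => Y1 w / b1).
  by apply: measurable_funM => //; exact: measurable_cst.
have mX2 : measurable_fun setT (fun w => Y2 w / b2).
  by apply: measurable_funM => //; exact: measurable_cst.
have E1 := @chi2_mgf R dT T P d _ mX1 H1 s1 ltac:(by rewrite hs1).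
have E2 := @chi2_mgf R dT T P d _ mX2 H2 s2 ltac:(by rewrite hs2).
rewrite hs1 in E1; rewrite hs2 in E2.
pose p := al `^ (d%:R / 4); pose q := be `^ (d%:R / 4).
have p0 : 0 < p by rewrite powR_gt0.
have q0 : 0 < q by rewrite powR_gt0.
have d24 : d%:R / 2 = d%:R / 4 + d%:R / 4 :> R by field.
have Ea : al `^ (- (d%:R / 2)) = (p * p)^-1.
  by rewrite powRN d24 powRD //; apply/implyP => _; rewrite gt_eqF.
have Eb : be `^ (- (d%:R / 2)) = (q * q)^-1.
  by rewrite powRN d24 powRD //; apply/implyP => _; rewrite gt_eqF.
have Erho : rho `^ (d%:R / 4) = (p * q)^-1.
  have -> : rho = (al * be)^-1.
    rewrite /rho /al /be; field.
    by rewrite spn b1n b2n.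
  rewrite -(@powR_inv1 _ (al * be)); last by rewrite mulr_ge0 // ltW.
  by rewrite -powRrM mulN1r powRN powRM ?ltW.
pose la := p / q.
have la0 : 0 < la by rewrite divr_gt0.
pose K := expR (m * t) / 2.
pose f1 := fun w => expR (s1 * (Y1 w / b1)).
pose f2 := fun w => expR (s2 * (Y2 w / b2)).
have mD : measurable_fun setT (fun w => Y1 w - Y2 w) by apply: measurable_funB.
have mE : measurable [set w | Y1 w - Y2 w <= m].
  have -> : [set w | Y1 w - Y2 w <= m] = (fun w => Y1 w - Y2 w) @^-1` `]-oo, m].
    by apply/seteqP; split => w /=; rewrite in_itv.
  rewrite -[X in measurable X]setTI; exact: (mD measurableT _ (measurable_itv _)).
have mf1 : measurable_fun setT f1.
  apply: measurableT_comp; first exact: measurable_expR.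
  exact: measurable_funM mX1.
have mf2 : measurable_fun setT f2.
  apply: measurableT_comp; first exact: measurable_expR.
  exact: measurable_funM mX2.
have pw : forall w, (\1_[set w | Y1 w - Y2 w <= m] w <= K * (la * f1 w + la^-1 * f2 w)).
  move=> w; set y1 := Y1 w; set y2 := Y2 w.
  pose u := expR (- (t * y1)); pose v := expR (t * y2).
  have eA : f1 w = u * u by rewrite /f1 /u -expRD /s1; congr expR; rewrite -/y1; field.
  have eB : f2 w = v * v by rewrite /f2 /v -expRD /s2; congr expR; rewrite -/y2; field.
  have key : expR (m * t) * (u * v) <= K * (la * f1 w + la^-1 * f2 w).
    rewrite eA eB /K.
    have h : 0 <= la^-1 * (la * u - v) ^+ 2 by rewrite mulr_ge0 ?sqr_ge0 // invr_ge0 ltW.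
    have e : la^-1 * (la * u - v) ^+ 2 = la * (u * u) + la^-1 * (v * v) - 2 * (u * v).
      by field; rewrite gt_eqF.
    rewrite e in h.
    have -> : expR (m * t) / 2 * (la * (u * u) + la^-1 * (v * v)) =
      expR (m * t) * ((la * (u * u) + la^-1 * (v * v)) / 2) by rewrite mulrAC -mulrA.
    rewrite ler_pM2l ?expR_gt0 //; lra.
  rewrite indicE; case: (boolP (w \in [set w | Y1 w - Y2 w <= m])) => wE /=.
    apply: le_trans key.
    rewrite /u /v -!expRD -[1]expR0 ler_expR.
    move: wE; rewrite inE /= -/y1 -/y2 => wE.
    have : 0 <= t * (m - (y1 - y2)) by apply: mulr_ge0; [exact: ltW | rewrite subr_ge0].
    lra.
  by rewrite mulr_ge0 ?addr_ge0 ?mulr_ge0 ?invr_ge0 ?expR_ge0 ?ltW.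
have Kla : forall w, 0 <= K * (la * f1 w + la^-1 * f2 w).
  by move=> w; rewrite mulr_ge0 ?addr_ge0 ?mulr_ge0 ?invr_ge0 ?expR_ge0 ?ltW.
have I : (\int[P]_w (\1_[set w | Y1 w - Y2 w <= m] w)%:E <=
          \int[P]_w (K * (la * f1 w + la^-1 * f2 w))%:E)%E.
  apply: ge0_le_integral => //.
  - by apply/measurable_EFinP; exact: measurable_indic.
  - apply/measurable_EFinP; apply: measurable_funM; first exact: measurable_cst.
    by apply: measurable_funD; apply: measurable_funM => //; exact: measurable_cst.
  - by move=> w _; rewrite lee_fin.
rewrite -(setIT [set w | _]) -integral_indic //.
apply: (le_trans I).
rewrite /f1 /f2.
under eq_integral do rewrite (EFinM K) EFinD (EFinM la) (EFinM la^-1).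
have mf1E : measurable_fun setT (fun w => (expR (s1 * (Y1 w / b1)))%:E) by exact/measurable_EFinP.
have mf2E : measurable_fun setT (fun w => (expR (s2 * (Y2 w / b2)))%:E) by exact/measurable_EFinP.
rewrite ge0_integralZl //; first last.
- by rewrite lee_fin /K divr_ge0 ?expR_ge0.
- by move=> w _; rewrite adde_ge0 // mule_ge0 // lee_fin ?invr_ge0 ?expR_ge0 ?ltW.
- apply: emeasurable_funD; apply: emeasurable_funM => //; exact: measurable_cst.
rewrite ge0_integralD //; first last.
- apply: emeasurable_funM => //; exact: measurable_cst.
- by move=> w _; rewrite mule_ge0 // lee_fin ?invr_ge0 ?expR_ge0 ?ltW.
- apply: emeasurable_funM => //; exact: measurable_cst.
- by move=> w _; rewrite mule_ge0 // lee_fin ?expR_ge0 ?ltW.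
rewrite !ge0_integralZl //; first last.
- by rewrite lee_fin ltW.
- by rewrite lee_fin invr_ge0 ltW.
rewrite E1 E2 -!EFinM lee_fin Ea Eb Erho /K /la.
rewrite le_eqVlt; apply/orP; left; apply/eqP; field.
by rewrite !gt_eqF.
Qed.
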